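(* Let $N\ge 2$ be an integer. Define $A,B:\mathbb{R}^2\to\mathbb{R}^2$ by $B=0$ (the zero operator) and $A(x_1,x_2)=\left(-\tfrac{x_2}{\sqrt{N-1}},\ \tfrac{x_1}{\sqrt{N-1}}\right)$. Then $A$ and $B$ are maximally monotone, $B$ is $\beta$-cocoercive for every $\beta>0$, and for the Douglas–Rachford splitting iteration with stepsize $\gamma=1$ and relaxation $\lambda=1$, the DR operator $T$ has unique fixed point $w^\star=0$ and for every initial point $w^1\in\mathbb{R}^2$, $$\|Tw^N-w^N\|^2=\frac{(N-1)^{N-1}}{N^N}\,\|w^1-w^\star\|^2 .$$
   Context: For a maximally monotone operator $M$, $J_M=(I+M)^{-1}$ and $R_M=2J_M-I$. For maximally monotone $A,B$, $\gamma>0$, $\lambda\in(0,2)$, the DR operator is $T=(1-\tfrac{\lambda}{2})I+\tfrac{\lambda}{2}R_{\gamma A}R_{\gamma B}$, and the DRS iteration is $x^k=J_{\gamma B}(w^k)$, $y^k=J_{\gamma A}(2x^k-w^k)$, $w^{k+1}=w^k+\lambda(y^k-x^k)=Tw^k$. An operator $M$ is $\beta$-cocoercive ($\beta>0$) if $\langle u-v,x-y\rangle\ge\beta\|u-v\|^2$ for all $(x,u),(y,v)$ in the graph of $M$. *)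

(* Defs.v *)
From Stdlib Require Import Reals Lra ClassicalEpsilon.
Open Scope R_scope.

Definition V : Type := (R * R)%type.
Definition vzero : V := (0, 0).
Definition vadd (a b : V) : V := (fst a + fst b, snd a + snd b).
Definition vscale (c : R) (a : V) : V := (c * fst a, c * snd a).
Definition vsub (a b : V) : V := (fst a - fst b, snd a - snd b).
Definition inner (a b : V) : R := fst a * fst b + snd a * snd b.
Definition norm2 (a : V) : R := inner a a.

(* A (set-valued) operator on V is given by its graph: M x u means u ∈ M x. *)
Definition op : Type := V -> V -> Prop.

Definition graph_of (f : V -> V) : op := fun x u => u = f x.

Definition monotone (M : op) : Prop :=
  forall x u y v, M x u -> M y v -> 0 <= inner (vsub u v) (vsub x y).

Definition maximally_monotone (M : op) : Prop :=
  monotone M /\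
  forall x u, (forall y v, M y v -> 0 <= inner (vsub u v) (vsub x y)) -> M x u.

Definition cocoercive (beta : R) (M : op) : Prop :=
  0 < beta /\
  forall x u y v, M x u -> M y v ->
    beta * norm2 (vsub u v) <= inner (vsub u v) (vsub x y).

Definition op_scale (g : R) (M : op) : op :=
  fun x u => exists a, M x a /\ u = vscale g a.

(* Resolvent J_M = (I + M)^{-1}: J_M w is a point x with w ∈ x + M x
   (single-valued and everywhere defined for maximally monotone M, by Minty). *)
Definition resolvent (M : op) (w : V) : V :=
  epsilon (inhabits vzero) (fun x => M x (vsub w x)).

Definition reflected (M : op) (w : V) : V :=
  vsub (vscale 2 (resolvent M w)) w.

Definition DR_op (A B : op) (gamma lambda : R) (w : V) : V :=
  vadd (vscale (1 - lambda / 2) w)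
       (vscale (lambda / 2) (reflected (op_scale gamma A)
                                       (reflected (op_scale gamma B) w))).

(* DRS iterates w^k, k >= 1: w^1 given, w^{k+1} = T w^k. *)
Definition DRS_iterate (A B : op) (gamma lambda : R) (w1 : V) (k : nat) : V :=
  Nat.iter (k - 1) (DR_op A B gamma lambda) w1.

Definition A_ex (N : nat) : op :=
  graph_of (fun x => (- snd x / sqrt (INR N - 1), fst x / sqrt (INR N - 1))).
Definition B_ex : op := graph_of (fun _ => vzero).

(* Main.v *)
Require Import Defs.
From Stdlib Require Import Reals Lra Lia ClassicalEpsilon.
Open Scope R_scope.

Lemma resolvent_eq M w x : M x (vsub w x) -> (forall y, M y (vsub w y) -> y = x) ->
  resolvent M w = x.
Proof. intros H1 H2. unfold resolvent. apply H2. apply epsilon_spec. exists x; auto. Qed.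

Definition Tf (a : R) (w : V) : V :=
  ((fst w + a * snd w) / (1 + a^2), (snd w - a * fst w) / (1 + a^2)).

Lemma A_ex_eq N : A_ex N = graph_of (fun x => (- snd x * / sqrt (INR N - 1), fst x * / sqrt (INR N - 1))).
Proof. reflexivity. Qed.

Lemma resB w : resolvent (op_scale 1 B_ex) w = w.
Proof.
  apply resolvent_eq.
  - exists vzero. split. reflexivity. destruct w; unfold vsub, vscale, vzero; simpl. f_equal; ring.
  - intros [y1 y2] [a [Ha Hy]]. unfold B_ex, graph_of in Ha. subst a. destruct w as [w1 w2].
    unfold vsub, vscale, vzero in Hy; simpl in Hy. injection Hy; intros. f_equal; lra.
Qed.

Lemma resA N w : resolvent (op_scale 1 (A_ex N)) w = Tf (/ sqrt (INR N - 1)) w.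
Proof.
  set (a := / sqrt (INR N - 1)).
  assert (Hp : 0 < 1 + a^2) by nra.
  apply resolvent_eq.
  - destruct w as [w1 w2]. unfold Tf; simpl.
    eexists. split. reflexivity. unfold vsub, vscale; simpl. unfold Rdiv. fold a.
    f_equal; field; lra.
  - intros [y1 y2] [b [Hb Hy]]. unfold A_ex, graph_of in Hb. subst b. destruct w as [w1 w2].
    unfold vsub, vscale in Hy; simpl in Hy. injection Hy; intros e2 e1. unfold Rdiv in e1, e2. fold a in e1, e2.
    unfold Tf; simpl.
    assert (E1 : y1 * (1 + a^2) = w1 + a * w2).
    { assert (y1 = w1 + a * y2) by lra.
      assert (y2 = w2 - a * y1) by lra. nra. }
    assert (E2 : y2 * (1 + a^2) = w2 - a * w1).
    { assert (y1 = w1 + a * y2) by lra.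
      assert (y2 = w2 - a * y1) by lra. nra. }
    f_equal; [rewrite <- E1 | rewrite <- E2]; field; lra.
Qed.

Lemma DR_eq N w : DR_op (A_ex N) B_ex 1 1 w = Tf (/ sqrt (INR N - 1)) w.
Proof.
  unfold DR_op, reflected. rewrite resB.
  replace (vsub (vscale 2 w) w) with w.
  2:{ destruct w; unfold vsub, vscale; simpl; f_equal; ring. }
  rewrite resA. set (a := / sqrt (INR N - 1)). destruct w as [w1 w2].
  unfold Tf, vadd, vscale, vsub; simpl. f_equal; field; nra.
Qed.

Lemma norm_Tf a w : norm2 (Tf a w) = norm2 w / (1 + a^2).
Proof.
  assert (0 < 1 + a^2) by nra.
  destruct w; unfold norm2, inner, Tf; simpl. field; lra.
Qed.

Lemma norm_Tf_sub a w : norm2 (vsub (Tf a w) w) = a^2 * norm2 w / (1 + a^2).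
Proof.
  assert (0 < 1 + a^2) by nra.
  destruct w; unfold norm2, inner, Tf, vsub; simpl. field; lra.
Qed.

Theorem mainTheorem3 (N : nat) (HN : (2 <= N)%nat) :
  maximally_monotone (A_ex N) /\
  maximally_monotone B_ex /\
  (forall beta : R, 0 < beta -> cocoercive beta B_ex) /\
  (DR_op (A_ex N) B_ex 1 1 vzero = vzero /\
   forall w : V, DR_op (A_ex N) B_ex 1 1 w = w -> w = vzero) /\
  (forall w1 : V,
     let wN := DRS_iterate (A_ex N) B_ex 1 1 w1 N in
     norm2 (vsub (DR_op (A_ex N) B_ex 1 1 wN) wN)
     = ((INR N - 1) ^ (N - 1) / INR N ^ N) * norm2 (vsub w1 vzero)).
Proof.
  assert (HN1 : 1 < INR N).
  { apply (lt_INR 1); lia. }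
  assert (Hs : 0 < sqrt (INR N - 1)) by (apply sqrt_lt_R0; lra).
  assert (Hs2 : sqrt (INR N - 1) * sqrt (INR N - 1) = INR N - 1) by (apply sqrt_sqrt; lra).
  set (a := / sqrt (INR N - 1)).
  assert (Ha2 : a^2 = / (INR N - 1)).
  { unfold a. rewrite <- Hs2 at 2. field. lra. }
  assert (Hp : 0 < 1 + a^2) by nra.
  rewrite A_ex_eq. fold a.
  split; [|split; [|split; [|split; [split|]]]].
  - split.
    + intros [x1 x2] u [y1 y2] v Hu Hv. unfold graph_of in *; subst.
      unfold inner, vsub; simpl. nra.
    + intros [x1 x2] [u1 u2] H. unfold graph_of.
      set (c1 := u1 - (- x2 * a)). set (c2 := u2 - x1 * a).
      specialize (H (x1 + c1, x2 + c2) _ eq_refl).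
      unfold inner, vsub in H; simpl in H.
      match type of H with 0 <= ?e => assert (E : e = -(c1*c1+c2*c2)) by (unfold c1, c2; ring) end.
      rewrite E in H.
      assert (Hc : c1 = 0 /\ c2 = 0) by (clearbody c1 c2; split; nra).
      unfold c1, c2 in Hc. simpl. f_equal; lra.
  - split.
    + intros x u y v Hu Hv. unfold B_ex, graph_of in *; subst.
      unfold inner, vsub, vzero; simpl. lra.
    + intros [x1 x2] [u1 u2] H. unfold B_ex, graph_of, vzero.
      specialize (H (x1 + u1, x2 + u2) _ eq_refl).
      unfold inner, vsub, vzero in H; simpl in H. f_equal; nra.
  - intros beta Hb. split; auto. intros x u y v Hu Hv. unfold B_ex, graph_of in *; subst.
    destruct x, y; unfold norm2, inner, vsub, vzero; simpl. right; ring.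
  - change (graph_of (fun x => (- snd x * a, fst x * a))) with (A_ex N). rewrite DR_eq. fold a. unfold Tf, vzero; simpl. f_equal; field; lra.
  - change (graph_of (fun x => (- snd x * a, fst x * a))) with (A_ex N). intros w Hw. rewrite DR_eq in Hw. fold a in Hw.
    assert (H0 : norm2 (vsub (Tf a w) w) = 0).
    { rewrite Hw. destruct w; unfold norm2, inner, vsub; simpl. ring. }
    rewrite norm_Tf_sub in H0.
    assert (norm2 w = 0).
    { assert (a^2 * norm2 w = 0).
      { apply (Rmult_eq_reg_r (/(1+a^2))). rewrite Rmult_0_l. exact H0.
        apply Rgt_not_eq, Rinv_0_lt_compat; lra. }
      assert (a^2 <> 0) by (rewrite Ha2; apply Rgt_not_eq, Rinv_0_lt_compat; lra).
      apply Rmult_integral in H. destruct H; [contradiction|assumption]. }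
    destruct w as [w1 w2]; unfold norm2, inner in H; simpl in H. unfold vzero. f_equal; nra.
  - change (graph_of (fun x => (- snd x * a, fst x * a))) with (A_ex N). intros w1. simpl. rewrite DR_eq. fold a.
    rewrite norm_Tf_sub.
    assert (It : forall k w, norm2 (Nat.iter k (DR_op (A_ex N) B_ex 1 1) w) = (/ (1 + a^2))^k * norm2 w).
    { induction k; intros w. simpl. ring.
      change (Nat.iter (S k) ?f w) with (f (Nat.iter k f w)).
      rewrite DR_eq. fold a. rewrite norm_Tf, IHk. simpl pow. field. lra. }
    unfold DRS_iterate. rewrite It.
    replace (vsub w1 vzero) with w1 by (destruct w1; unfold vsub, vzero; simpl; f_equal; ring).
    assert (Hq : / (1 + a^2) = (INR N - 1) / INR N).
    { rewrite Ha2. field. split; lra. }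
    rewrite Hq, Ha2.
    destruct N as [|M]; [lia|]. replace (S M - 1)%nat with M by lia.
    set (n := INR (S M)) in *. unfold Rdiv. rewrite Rpow_mult_distr, pow_inv. simpl pow. field. split; [|split]; try lra.
    apply pow_nonzero; lra.
Qed.
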